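(* Let $\tau\in(0,1]$ and suppose $k\,\alpha^{(2-\tau)d}\ge 2$. Let $u,v\in V$ be distinct with $|\Gamma(u)\cap\Gamma(v)|\ge\tau d$. Then, under the Fast-Filter model described in the context, the expected number of indices $i\in[k]$ with $u\in S_i$ and $v\in S_i$ is at least $2$.
   Context: Let $G=(U,V,E)$ be a bipartite graph with $|U|=M$ and $|V|=N$. For $v\in V$ let $\Gamma(v)\subseteq U$ be its set of neighbours, and assume $|\Gamma(v)|=d\ge 1$ for every $v\in V$. Let $k=2^{m}$ and $\alpha=2^{-r}$, where $m,r$ are positive integers. Identify $[k]=\{1,\dots,k\}$ bijectively with the vector space $\mathrm{GF}(2)^m$ (for instance via the binary representation of $i-1$). Fast-Filter model: for each $u\in U$, independently draw a uniformly random matrix $A'_u\in\mathrm{GF}(2)^{r\times m}$ and a uniformly random vector $b'_u\in\mathrm{GF}(2)^{r}$; all of these are mutually independent. For $v\in V$, let $A^v$ be the $(dr)\times m$ matrix obtained by stacking the matrices $A'_u$, $u\in\Gamma(v)$, in a fixed order, and let $b^v\in\mathrm{GF}(2)^{dr}$ be obtained by stacking the $b'_u$, $u\in\Gamma(v)$, in the same order. For $i\in[k]$ (viewed as a vector in $\mathrm{GF}(2)^m$), the survival set is $S_i=\{v\in V: A^v i+b^v=0\}$, with arithmetic over $\mathrm{GF}(2)$. *)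

(* Defs.v *)
From Stdlib Require Import Reals.
Section RealConds.
Local Open Scope R_scope.
(* k = 2^m, alpha = 2^(-r); hypothesis  k * alpha^((2 - tau) d) >= 2  (real exponent) *)
Definition size_cond (m r d : nat) (tau : R) : Prop :=
  INR (2 ^ m) * Rpower (Rpower 2 (- INR r)) ((2 - tau) * INR d) >= 2.
Definition tau_range (tau : R) : Prop := 0 < tau <= 1.
Definition overlap_cond (c d : nat) (tau : R) : Prop := INR c >= tau * INR d.
End RealConds.

From HB Require Import structures.
From mathcomp Require Import all_boot all_order all_algebra.

Set Implicit Arguments.
Unset Strict Implicit.
Unset Printing Implicit Defensive.

Local Open Scope ring_scope.

(* A sample point of the Fast-Filter model: for each u in U, a pair
   (A'_u, b'_u) in GF(2)^{r x m} x GF(2)^r.  The probability space is the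
   uniform distribution on this finite type. *)
Definition FFsample (U : finType) (r m : nat) : finType :=
  {ffun U -> 'M['F_2]_(r, m) * 'cV['F_2]_r}%type.

(* v survives for index i (viewed as a vector of GF(2)^m): A^v i + b^v = 0,
   where A^v, b^v stack the blocks A'_u, b'_u for u in Gamma(v); the stacked
   system vanishes iff every block equation vanishes. *)
Definition survives (U V : finType) (r m : nat) (Gamma : V -> {set U})
  (w : FFsample U r m) (i : 'cV['F_2]_m) (v : V) : bool :=
  [forall x in Gamma v, ((w x).1 *m i + (w x).2 == 0)].

(* number of indices i in [k] = GF(2)^m with both u and v in S_i *)
Definition joint_count (U V : finType) (r m : nat) (Gamma : V -> {set U})
  (w : FFsample U r m) (u v : V) : nat :=
  #|[set i : 'cV['F_2]_m | survives Gamma w i u && survives Gamma w i v]|.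

Definition expected_joint (U V : finType) (r m : nat) (Gamma : V -> {set U})
  (u v : V) : rat :=
  (\sum_(w : FFsample U r m) (joint_count Gamma w u v)%:R) / (#|FFsample U r m|)%:R.

(* Main.v *)
Require Import Defs.
From Stdlib Require Import Reals Lra Lia ssreflect.
Section RealP.
Local Open Scope R_scope.
Lemma real_part (m r d w c : nat) tau : (w + c = 2*d)%nat -> overlap_cond c d tau -> size_cond m r d tau -> (2^(r*w+1) <= 2^m)%nat.
Proof.
move=> hwc; rewrite /overlap_cond /size_cond => ho hk.
have hw : INR w = 2 * INR d - INR c.
  have := f_equal INR hwc; rewrite plus_INR mult_INR /=; lra.
rewrite Rpower_mult in hk.
set e := -INR r * ((2 - tau) * INR d) in hk.
have hle : INR (r * w) <= - e.
  rewrite /e mult_INR hw. have := pos_INR r. nra.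
have h1 : Rpower 2 (INR (r*w)) <= Rpower 2 (- e) by apply: Rle_Rpower; lra.
have h2 : Rpower 2 e * Rpower 2 (-e) = 1 by rewrite -Rpower_plus Rplus_opp_r Rpower_O; lra.
have hp : 0 < Rpower 2 e by apply: exp_pos.
rewrite Rpower_pow in h1; last lra.
have h3 : Rpower 2 (-e) <= INR (2^m) / 2.
  apply (Rmult_le_reg_l (Rpower 2 e)) => //.
  rewrite h2. nra.
apply/INR_le; rewrite !pow_INR /=. rewrite pow_add /=. rewrite pow_INR /= in h3.
replace (1+1) with 2 in * by lra. lra.
Qed.
End RealP.
From HB Require Import structures.
From mathcomp Require Import all_boot all_order all_algebra.
Import GRing.Theory Num.Theory.
Local Open Scope ring_scope.

Lemma foldr_prod (U : finType) (f : U -> nat) : foldr muln 1 [seq f x | x : U] = (\prod_(x : U) f x)%N.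
Proof. by rewrite foldr_map -big_enum /= unlock. Qed.

Lemma card_sol (r m : nat) (i : 'cV['F_2]_m) :
  #|[pred p : ('M['F_2]_(r, m) * 'cV['F_2]_r)%type | p.1 *m i + p.2 == 0]| = #|'M['F_2]_(r, m)|.
Proof.
rewrite -(card_image (f := fun A : 'M['F_2]_(r, m) => (A, - (A *m i)))); last first.
  by move=> A B [].
apply: eq_card => -[A b] /=; rewrite inE /=.
apply/idP/idP.
  move/eqP => h; apply/imageP; exists A => //.
  have hb : b = - (A *m i) by apply/eqP; rewrite -subr_eq0 opprK addrC h.
  by rewrite hb.
by case/imageP => A' _ [-> ->]; rewrite subrr.
Qed.

Lemma card_fam (U : finType) (r m : nat) (W : {set U}) (i : 'cV['F_2]_m) :
  #|[set w : FFsample U r m | [forall x in W, ((w x).1 *m i + (w x).2 == 0)]]| =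
  (\prod_(x : U) (if x \in W then #|'M['F_2]_(r, m)| else #|'M['F_2]_(r, m)| * #|'cV['F_2]_r|))%N.
Proof.
pose F := fun x : U => [pred p : ('M['F_2]_(r, m) * 'cV['F_2]_r)%type | (x \in W) ==> (p.1 *m i + p.2 == 0)].
have -> : #|[set w : FFsample U r m | [forall x in W, ((w x).1 *m i + (w x).2 == 0)]]| = #|family F|.
  apply: eq_card => w; rewrite inE; apply/forallP/forallP => h x; move: (h x); by rewrite inE.
rewrite card_family foldr_prod; apply: eq_bigr => x _.
case: ifP => xW.
  by rewrite -(@card_sol r m i); apply: eq_card => p; rewrite !inE xW.
by rewrite -card_prod; apply: eq_card => p; rewrite !inE xW.
Qed.

Lemma powE (a n : nat) : Nat.pow a n = (a ^ n)%N.
Proof. elim: n => [|n IH] //=; by rewrite expnS IH. Qed.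

Lemma prod_split (U : finType) (W : {set U}) (a c : nat) :
  ((\prod_(x : U) (if x \in W then a else a * c)) * c ^ #|W| = (a * c) ^ #|U|)%N.
Proof.
rewrite (bigID (fun x => x \in W)) /=.
rewrite (eq_bigr (fun _ => a)); last by move=> x ->.
rewrite [X in (_ * X * _)%N](eq_bigr (fun _ => (a * c)%N)); last by move=> x /negbTE ->.
rewrite !prod_nat_const.
rewrite -(cardsC W) expnD.
have -> : #|(fun i : U => i \notin W)| = #|~: W| by apply: eq_card => x; rewrite inE.
by rewrite mulnAC !expnMn.
Qed.

Local Close Scope ring_scope.

Theorem lemma1 (U V : finType) (Gamma : V -> {set U}) (d m r : nat)
  (tau : Rdefinitions.R)
  (hd : forall x : V, #|Gamma x| = d) (hd1 : (1 <= d)%N)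
  (hm : (0 < m)%N) (hr : (0 < r)%N)
  (htau : tau_range tau)
  (hk : size_cond m r d tau)
  (u v : V) (huv : u != v)
  (hint : overlap_cond #|Gamma u :&: Gamma v| d tau) :
  (2%:R <= expected_joint r m Gamma u v :> rat)%R.
Proof.
set W := Gamma u :|: Gamma v.
have hW : (#|W| + #|Gamma u :&: Gamma v| = 2 * d)%N by rewrite cardsUI !hd mul2n addnn.
have hreal := @real_part m r d _ _ tau hW hint hk.
set a := #|'M['F_2]_(r, m)|.
set c := #|'cV['F_2]_r|.
have hc : c = (2 ^ r)%N by rewrite /c card_mx card_Fp // muln1.
have hk2 : #|'cV['F_2]_m| = (2 ^ m)%N by rewrite card_mx card_Fp // muln1.
set P := (\prod_(x : U) (if x \in W then a else a * c))%N.
have hP := @prod_split U W a c.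
have hN : (\sum_(w : FFsample U r m) joint_count Gamma w u v = 2 ^ m * P)%N.
  rewrite /joint_count.
  under eq_bigr => w _ do rewrite -sum1dep_card big_mkcond.
  rewrite exchange_big /= -hk2 -sum_nat_const.
  apply: eq_bigr => i _.
  rewrite -big_mkcond /= sum1dep_card /P /a /c -(@card_fam U r m W i).
  apply: eq_card => w; rewrite !inE /survives.
  apply/andP/forallP.
    case=> /forallP h1 /forallP h2 x; apply/implyP; rewrite inE => /orP [hx|hx].
      by move/implyP: (h1 x); apply.
    by move/implyP: (h2 x); apply.
  move=> h; split; apply/forallP => x; apply/implyP => hx; move/implyP: (h x); apply;
    by rewrite inE hx ?orbT.
have hF : #|FFsample U r m| = ((a * c) ^ #|U|)%N by rewrite card_ffun card_prod.
rewrite /expected_joint -natr_sum hN hF.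
have hpos : (0 < (a * c) ^ #|U|)%N.
  by rewrite expn_gt0 muln_gt0 /a /c !card_mx card_Fp // !expn_gt0.
rewrite ler_pdivlMr ?ltr0n // -natrM ler_nat.
rewrite -hP.
have hc0 : (0 < c ^ #|W|)%N by rewrite hc -expnM expn_gt0.
rewrite -/P mulnCA [X in (_ <= X)%N]mulnC leq_mul2l; apply/orP; right.
rewrite hc -expnM -expnS -addn1.
move/leP: hreal.
rewrite !powE Nat.add_1_r => h; exact: h.
Qed.
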